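(* Let $\mathcal{X}=\bigsqcup_{j=1}^m\mathcal{X}_j$ be a finite set partitioned into disjoint nonempty blocks and let $T$ be a block-invariant row-stochastic matrix on $\mathcal{X}$ (i.e. $\sum_{y\in\mathcal{X}_j}T(x,y)=1$ for all $x\in\mathcal{X}_j$, all $j$). Fix $p_0\in\mathcal{P}(\mathcal{X})$, define $p_{n+1}=p_nT$ for $n\ge 0$, and let $$V(p):=\inf_{\pi\in\Pi(p_0)}D_{\mathrm{KL}}(p\|\pi),\qquad \Pi(p_0):=\Bigl\{\textstyle\sum_{j=1}^m w_j(p_0)\,\pi_j:\ \pi_j\in\mathcal{I}_j\Bigr\}.$$ Then (i) $V(p_{n+1})\le V(p_n)$ for all $n\ge 0$. (ii) If in addition each block kernel $T_j$ is primitive (irreducible and aperiodic) with unique invariant distribution $\pi_j^\ast\in\mathcal{I}_j$, then for all $n\ge0$ $$V(p_n)=\sum_{j:\,w_j(p_0)>0} w_j(p_0)\,D_{\mathrm{KL}}\bigl(p_n^{(j)}\|\pi_j^\ast\bigr),$$ and $V(p_n)\to 0$ as $n\to\infty$.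
   Context: $\mathcal{P}(\mathcal{Y})$ is the set of probability distributions (row vectors) on a finite set $\mathcal{Y}$; a row-stochastic $T$ acts by $(pT)(y)=\sum_x p(x)T(x,y)$. $T_j$ denotes the restriction of $T$ to $\mathcal{X}_j\times\mathcal{X}_j$ (row-stochastic by block invariance), and $\mathcal{I}_j:=\{\pi\in\mathcal{P}(\mathcal{X}_j):\pi T_j=\pi\}$ is its set of invariant distributions; elements of $\mathcal{P}(\mathcal{X}_j)$ are extended by zero to $\mathcal{X}$. Block masses: $w_j(p)=\sum_{x\in\mathcal{X}_j}p(x)$; when $w_j(p)>0$, $p^{(j)}(x)=p(x)/w_j(p)$ for $x\in\mathcal{X}_j$. $D_{\mathrm{KL}}(p\|q)=\sum_x p(x)\log\frac{p(x)}{q(x)}$ with $0\log(0/q)=0$ and $p\log(p/0)=+\infty$ for $p>0$. *)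

(* Defs.v *)
From HB Require Import structures.
From mathcomp Require Import all_boot all_order all_algebra.
From mathcomp Require Import all_classical all_reals all_analysis.
Set Implicit Arguments. Unset Strict Implicit. Unset Printing Implicit Defensive.
Import Order.TTheory GRing.Theory Num.Theory.
Local Open Scope ring_scope.

Section Defs.
Variables (R : realType) (X : finType) (m : nat) (blk : X -> 'I_m).

Definition is_dist (p : X -> R) : Prop :=
  (forall x, 0 <= p x) /\ \sum_(x : X) p x = 1.

Definition wt (j : 'I_m) (p : X -> R) : R := \sum_(x | blk x == j) p x.

(* normalized restriction p^(j), extended by zero; only used when w_j(p) > 0 *)
Definition cond (j : 'I_m) (p : X -> R) : X -> R :=
  fun x => if blk x == j then p x / wt j p else 0.

Definition push (T : X -> X -> R) (p : X -> R) : X -> R :=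
  fun y => \sum_(x : X) p x * T x y.

Fixpoint bpow (T : X -> X -> R) (j : 'I_m) (n : nat) : X -> X -> R :=
  match n with
  | 0 => fun x y => if x == y then 1 else 0
  | n'.+1 => fun x y => \sum_(z | blk z == j) bpow T j n' x z * T z y
  end.

Definition primitive_block (T : X -> X -> R) (j : 'I_m) : Prop :=
  exists k : nat, forall x y, blk x == j -> blk y == j -> 0 < bpow T j k x y.

Definition inv_block (T : X -> X -> R) (j : 'I_m) (pi : X -> R) : Prop :=
  is_dist pi /\ (forall x, blk x != j -> pi x = 0) /\
  (forall y, blk y == j -> \sum_(x | blk x == j) pi x * T x y = pi y).

Definition KL (p q : X -> R) : \bar R :=
  (\sum_(x : X)
     (if p x == 0%R then 0%E
      else if q x == 0%R then +oo%E
      else (p x * ln (p x / q x))%:E))%E.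

Definition PiSet (T : X -> X -> R) (p0 : X -> R) : set (X -> R) :=
  [set pi | exists pis : 'I_m -> X -> R,
     (forall j, inv_block T j (pis j)) /\
     pi = (fun x => \sum_(j < m) wt j p0 * pis j x)].

Definition Vfun (T : X -> X -> R) (p0 p : X -> R) : \bar R :=
  ereal_inf [set KL p pi | pi in PiSet T p0].

End Defs.

(* Main.v *)
Require Import Defs.
From HB Require Import structures.
From mathcomp Require Import all_boot all_order all_algebra.
From mathcomp Require Import all_classical all_reals all_analysis.
From mathcomp Require Import ring lra.
Import Order.TTheory GRing.Theory Num.Theory.
Local Open Scope classical_set_scope.
Local Open Scope ring_scope.
Set Implicit Arguments. Unset Strict Implicit. Unset Printing Implicit Defensive.

Section KLsec.
Variables (R : realType) (X : finType).

Definition klr (a b : R) : R := if a == 0 then 0 else a * ln (a / b).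

Lemma KL_fin (p q : X -> R) : (forall x, p x != 0 -> q x != 0) ->
  KL p q = (\sum_x klr (p x) (q x))%:E.
Proof.
move=> H; rewrite /KL -sumEFin; apply: eq_bigr => x _; rewrite /klr.
case: eqP => // /eqP px; by rewrite (negbTE (H x px)).
Qed.

Lemma KL_inf (p q : X -> R) x : p x != 0 -> q x = 0 -> KL p q = +oo%E.
Proof.
move=> px qx; rewrite /KL (bigD1 x) //= (negbTE px) qx eqxx; apply: addye.
set rest := (X in X != _).
have Hle : ((\sum_(y | y != x) (if (p y == 0) || (q y == 0) then 0
      else p y * ln (p y / q y)))%:E <= rest)%E.
  rewrite -sumEFin; apply: lee_sum => y _.
  case: (p y == 0) => //=; case: (q y == 0) => //=; exact: leey.
apply/eqP => Hr; move: Hle; by rewrite Hr leeNy_eq.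
Qed.

Lemma ln_le_sub1 (t : R) : 0 < t -> ln t <= t - 1.
Proof. move=> t0; have := @le_ln1Dx R (t - 1); rewrite (_ : 1 + (t - 1) = t); [apply; lra | ring]. Qed.

Lemma klr_lb a b c : 0 <= a -> 0 <= b -> (a != 0 -> b != 0) -> 0 < c ->
  a * ln c + a - b * c <= klr a b.
Proof.
move=> a0 b0 ab c0; rewrite /klr; case: eqP => [->|/eqP an0].
  rewrite mul0r add0r sub0r oppr_le0; apply: mulr_ge0 => //; exact: ltW.
have apos : 0 < a by rewrite lt_def an0.
have bpos : 0 < b by rewrite lt_def ab.
pose t := b * c / a.
have tpos : 0 < t by rewrite /t !(mulr_gt0, invr_gt0).
have -> : a / b = c / t by rewrite /t; field; rewrite ?gt_eqF.
rewrite ln_div ?posrE //.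
have H := ln_le_sub1 tpos.
have H2 : a * ln t <= a * (t - 1) by rewrite ler_pM2l.
have E : a * (t - 1) = b * c - a by rewrite /t; field; rewrite gt_eqF.
rewrite E in H2.
rewrite mulrBr; lra.
Qed.

Lemma klr_scale a b t : 0 <= t -> klr (a * t) (b * t) = t * klr a b.
Proof.
move=> t0; rewrite /klr mulf_eq0; case: (a =P 0) => [_|/eqP an0] /=; first by rewrite mulr0.
case: (t =P 0) => [->|/eqP tn0] /=; first by rewrite mul0r.
have -> : a * t / (b * t) = a / b by rewrite invfM mulrACA divff // mulr1.
by rewrite mulrAC mulrC.
Qed.

Lemma logsum (I : finType) (a b : I -> R) : (forall i, 0 <= a i) -> (forall i, 0 <= b i) ->
  (forall i, a i != 0 -> b i != 0) ->
  klr (\sum_i a i) (\sum_i b i) <= \sum_i klr (a i) (b i).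
Proof.
move=> a0 b0 ab.
case: (boolP [exists i, a i != 0]) => [/existsP[i ai]|].
  have Apos : 0 < \sum_i a i.
    rewrite (bigD1 i) //= ltr_pwDl ?sumr_ge0 // lt_def ai a0 //.
  have Bpos : 0 < \sum_i b i.
    rewrite (bigD1 i) //= ltr_pwDl ?sumr_ge0 // lt_def ab // b0 //.
  set A := \sum_i a i; set B := \sum_i b i.
  have cpos : 0 < A / B by rewrite divr_gt0.
  apply: le_trans (ler_sum _ (fun i _ => klr_lb (a0 i) (b0 i) (@ab i) cpos)).
  rewrite sumrB big_split /= -!mulr_suml -/A -/B.
  have -> : B * (A / B) = A by rewrite mulrC divfK // gt_eqF.
  rewrite /klr gt_eqF //; lra.
rewrite negb_exists => /forallP H.
have az i : a i = 0 by apply/eqP; have := H i; rewrite negbK.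
have -> : \sum_i a i = 0 by rewrite big1.
rewrite /klr eqxx big1 // => i _; by rewrite az eqxx.
Qed.

Lemma klr_ub a b : 0 <= a -> 0 <= b -> (a != 0 -> b != 0) ->
  klr a b <= (if b == 0 then 0 else (a - b) ^+ 2 / b) + (a - b).
Proof.
move=> a0 b0 ab; case: (b =P 0) => [b00|/eqP bn0].
  have -> : a = 0 by apply/eqP; apply: contraT => /ab; rewrite b00 eqxx.
  by rewrite /klr eqxx b00 subrr addr0.
have bpos : 0 < b by rewrite lt_def bn0.
rewrite /klr; case: (a =P 0) => [->|/eqP an0].
  rewrite (_ : (0 - b) ^+ 2 / b + (0 - b) = 0) //; field; exact: bn0.
have apos : 0 < a by rewrite lt_def an0.
have H := ln_le_sub1 (divr_gt0 apos bpos).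
have H2 : a * ln (a / b) <= a * (a / b - 1) by rewrite ler_pM2l.
apply: le_trans H2 _; rewrite le_eqVlt; apply/orP; left; apply/eqP; field; exact: bn0.
Qed.

Lemma klr_div a b w : 0 < w -> klr a (w * b) = w * klr (a / w) b.
Proof.
move=> w0; rewrite /klr mulf_eq0 invr_eq0 (gt_eqF w0) orbF.
case: (a =P 0) => [_|_]; first by rewrite mulr0.
rewrite mulrA [w * (a / w)]mulrC divfK ?gt_eqF //; congr (_ * ln _).
by rewrite invfM mulrA.
Qed.

End KLsec.

Lemma pos_lb (R : realType) (I : finType) (Q : pred I) (f : I -> R) :
  (forall i, Q i -> 0 < f i) -> exists2 d, 0 < d & forall i, Q i -> d <= f i.
Proof.
move=> H; set S := \sum_(i | Q i) (f i)^-1.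
have S0 : 0 <= S by apply: sumr_ge0 => i Qi; rewrite invr_ge0 ltW // H.
exists (1 + S)^-1; first by rewrite invr_gt0; lra.
move=> i Qi; have fi := H i Qi.
have Hle : (f i)^-1 <= S.
  rewrite /S (bigD1 i) //= lerDl sumr_ge0 // => j /andP[Qj _]; rewrite invr_ge0 ltW // H //.
rewrite invf_ple ?posrE //; lra.
Qed.

Lemma geo (R : realType) (a : nat -> R) (K : nat) (r : R) :
  (forall n, 0 <= a n) -> (forall n, a n.+1 <= a n) -> 0 <= r -> r < 1 ->
  (forall n, a (n + K)%N <= r * a n) -> a @ \oo --> 0.
Proof.
move=> a0 amono r0 r1 aK.
have mono n n' : (n <= n')%N -> a n' <= a n.
  move=> /subnK <-; elim: (n' - n)%N => [|t IH]; first by rewrite add0n.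
  rewrite addSn; exact: le_trans (amono _) IH.
have geo t : a (K * t)%N <= r ^+ t * a 0%N.
  elim: t => [|t IH]; first by rewrite muln0 expr0 mul1r.
  rewrite mulnS addnC exprS -mulrA; apply: le_trans (aK _) _; exact: ler_wpM2l.
have rt : (fun t => r ^+ t * a 0%N) @ \oo --> 0.
  rewrite -(mul0r (a 0%N)); apply: cvgMr_tmp; apply: cvg_expr; by rewrite ger0_norm.
apply/cvgrPdist_lt => e e0.
have /cvgrPdist_lt/(_ e e0) := rt; case=> N _ HN.
exists (K * N)%N => // n Hn.
rewrite sub0r normrN ger0_norm //.
have := HN N (leqnn N); rewrite sub0r normrN ger0_norm ?mulr_ge0 ?exprn_ge0 // => HN'.
apply: le_lt_trans (mono _ _ Hn) _; exact: le_lt_trans (geo N) HN'.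
Qed.

Lemma squeeze0 (R : realType) (v A : nat -> R) (c : R) :
  (forall n, 0 <= v n <= c * (A n * A n)) -> A @ \oo --> 0 -> v @ \oo --> 0.
Proof.
move=> H HA.
apply: (@squeeze_cvgr _ _ _ _ (cst 0) (fun n => c * (A n * A n))).
- by near=> n; apply: H.
- apply/cvgrPdist_lt => e e0; exists 0%N => // n _; by rewrite /cst subrr normr0.
- rewrite -(mulr0 c) -(mulr0 0); apply: cvgMl_tmp; exact: (cvgM HA HA).
Unshelve. all: end_near.
Qed.

Section Markov.
Variables (R : realType) (X : finType) (m : nat) (blk : X -> 'I_m) (T : X -> X -> R).
Hypothesis T0 : forall x y, 0 <= T x y.
Hypothesis T1 : forall x, \sum_(y : X) T x y = 1.
Hypothesis Tb : forall x, \sum_(y | blk y == blk x) T x y = 1.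

Lemma Toff x y : blk y != blk x -> T x y = 0.
Proof.
move=> Hy; have := T1 x; rewrite (bigID (fun y => blk y == blk x)) /= Tb.
move/(congr1 (fun t => t - 1)); rewrite addrC addrK subrr => H0.
exact: (psumr_eq0P (fun y _ => T0 x y) H0).
Qed.

Lemma push_blk p y : push T p y = \sum_(x | blk x == blk y) p x * T x y.
Proof.
rewrite /push (bigID (fun x => blk x == blk y)) /= [X in _ + X]big1 ?addr0 // => x Hx.
by rewrite Toff ?mulr0 // eq_sym.
Qed.

Lemma push_sum p : \sum_y push T p y = \sum_x p x.
Proof.
rewrite /push exchange_big /=; apply: eq_bigr => x _; by rewrite -mulr_sumr T1 mulr1.
Qed.

Lemma push_ge0 p : (forall x, 0 <= p x) -> forall y, 0 <= push T p y.
Proof. move=> H y; apply: sumr_ge0 => x _; exact: mulr_ge0. Qed.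

Lemma push_lin p q : push T (fun x => p x - q x) = (fun y => push T p y - push T q y).
Proof. apply/funext => y; rewrite /push -sumrB; apply: eq_bigr => x _; by rewrite mulrBl. Qed.

Lemma wt_push j p : wt blk j (push T p) = wt blk j p.
Proof.
rewrite /wt /push exchange_big /= [RHS]big_mkcond; apply: eq_bigr => x _.
rewrite -mulr_sumr; case: (eqVneq (blk x) j) => [<-|Hx]; first by rewrite ?eqxx Tb mulr1.
rewrite big1 ?mulr0 // => y /eqP Hy; apply: Toff; by rewrite Hy eq_sym.
Qed.

Lemma inv_push j pi : inv_block blk T j pi -> push T pi = pi.
Proof.
case=> [[pi0 pi1] [off inv]]; apply/funext => y.
case: (eqVneq (blk y) j) => [Hy|Hy].
  by rewrite push_blk Hy; apply: inv; rewrite Hy.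
rewrite off // /push big1 // => x _; case: (eqVneq (blk x) j) => [Hx|Hx].
  by rewrite Toff ?mulr0 // Hx.
by rewrite off ?mul0r.
Qed.

Lemma DP p q : (forall x, 0 <= p x) -> (forall x, 0 <= q x) ->
  (KL (push T p) (push T q) <= KL p q)%E.
Proof.
move=> p0' q0'.
case: (boolP [exists x, (p x != 0) && (q x == 0)]) => [/existsP[x /andP[px /eqP qx]]|].
  by rewrite (KL_inf px qx) leey.
rewrite negb_exists => /forallP H.
have supp x : p x != 0 -> q x != 0 by move=> px; have := H x; rewrite px /=.
have suppT y : push T p y != 0 -> push T q y != 0.
  move=> Hy.
  have [x /andP [px Tx]] : exists x, (p x != 0) && (T x y != 0).
    case: (boolP [exists x, (p x != 0) && (T x y != 0)]) => [/existsP //|].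
    rewrite negb_exists => /forallP Hx; exfalso; move/eqP: Hy; apply.
    rewrite /push big1 // => x _; have := Hx x; rewrite negb_and !negbK => /orP[] /eqP ->;
      by rewrite ?mul0r ?mulr0.
  have qpos : 0 < q x by rewrite lt_def supp // q0'.
  have Tpos : 0 < T x y by rewrite lt_def Tx T0.
  rewrite gt_eqF // /push (bigD1 x) //=.
  apply: lt_le_trans (_ : q x * T x y <= _); first exact: mulr_gt0.
  rewrite lerDl sumr_ge0 // => z _; exact: mulr_ge0.
rewrite !KL_fin // lee_fin.
apply: le_trans (_ : \sum_y \sum_x klr (p x * T x y) (q x * T x y) <= _).
  apply: ler_sum => y _; rewrite /push; apply: logsum.
  - move=> x; exact: mulr_ge0.
  - move=> x; exact: mulr_ge0.
  - move=> x; rewrite !mulf_eq0 negb_or => /andP[px Tx]; by rewrite negb_or supp.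
rewrite (eq_bigr (fun y => \sum_x T x y * klr (p x) (q x))); last first.
  by move=> y _; apply: eq_bigr => x _; rewrite klr_scale.
rewrite exchange_big /=; apply: ler_sum => x _; by rewrite -mulr_suml T1 mul1r.
Qed.

Variable p0 : X -> R.
Hypothesis p0d : is_dist p0.

Lemma wt_ge0 j : 0 <= wt blk j p0.
Proof. apply: sumr_ge0 => x _; exact: p0d.1. Qed.

Lemma PiSet_push pi : PiSet blk T p0 pi -> push T pi = pi.
Proof.
case=> pis [Hinv ->]; apply/funext => y; rewrite /push.
under eq_bigr do rewrite mulr_suml.
rewrite exchange_big /=; apply: eq_bigr => j _.
rewrite -(congr1 (fun f => f y) (inv_push (Hinv j))) /push mulr_sumr.
apply: eq_bigr => x _; by rewrite mulrA.
Qed.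

Lemma PiSet_ge0 pi : PiSet blk T p0 pi -> forall x, 0 <= pi x.
Proof.
case=> pis [Hinv ->] x; apply: sumr_ge0 => j _; apply: mulr_ge0; first exact: wt_ge0.
exact: (Hinv j).1.1.
Qed.

Definition pn n := iter n (push T) p0.

Lemma pn_ge0 n x : 0 <= pn n x.
Proof. elim: n x => [|n IH] x /=; [exact: p0d.1 | exact: push_ge0]. Qed.

Lemma pnS n : pn n.+1 = push T (pn n). Proof. by []. Qed.

Lemma Vmono n : (Vfun blk T p0 (pn n.+1) <= Vfun blk T p0 (pn n))%E.
Proof.
rewrite /Vfun; apply: le_ereal_inf_tmp => _ [pi Hpi <-].
apply: (@le_trans _ _ (KL (pn n.+1) pi)).
  by apply: ereal_inf_lbound; exists pi.
have := @DP (pn n) pi (pn_ge0 n) (PiSet_ge0 Hpi); rewrite (PiSet_push Hpi) => H; exact: H.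
Qed.

Hypothesis Hne : forall j : 'I_m, exists x : X, blk x = j.
Variable pistar : 'I_m -> X -> R.
Hypothesis Hprim : forall j, primitive_block blk T j.
Hypothesis Hinv : forall j, inv_block blk T j (pistar j).
Hypothesis Huniq : forall j pi, inv_block blk T j pi -> pi = pistar j.

Definition w j := wt blk j p0.
Definition pis := fun x => \sum_(j < m) w j * pistar j x.

Lemma bpow_ge0 j k x y : 0 <= bpow blk T j k x y.
Proof.
elim: k x y => [|k IH] x y /=; first by case: (x == y).
apply: sumr_ge0 => z _; exact: mulr_ge0.
Qed.

Lemma bpow_row j k x : blk x == j -> \sum_(y | blk y == j) bpow blk T j k x y = 1.
Proof.
move=> bx; elim: k => [|k IH] /=.
  rewrite (bigD1 x) //= eqxx big1 ?addr0 // => y /andP[_ yx]; by rewrite eq_sym (negbTE yx).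
rewrite exchange_big /= -[RHS]IH; apply: eq_bigr => z bz.
rewrite -mulr_sumr (_ : \sum_(i | blk i == j) T z i = 1) ?mulr1 //.
by rewrite -(eqP bz) Tb.
Qed.

Lemma iter_bpow j k v y : blk y == j ->
  iter k (push T) v y = \sum_(x | blk x == j) v x * bpow blk T j k x y.
Proof.
elim: k y => [|k IH] y bz /=.
  rewrite (bigD1 y) //= eqxx mulr1 big1 ?addr0 // => x /andP[_ xy].
  by rewrite (negbTE xy) mulr0.
rewrite push_blk (eqP bz).
rewrite (eq_bigr (fun z => (\sum_(x | blk x == j) v x * bpow blk T j k x z) * T z y)); last first.
  by move=> z bz'; rewrite IH.
rewrite (eq_bigr (fun z => \sum_(x | blk x == j) v x * bpow blk T j k x z * T z y)); last first.
  by move=> z _; rewrite mulr_suml.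
rewrite exchange_big /=; apply: eq_bigr => x _; rewrite mulr_sumr; apply: eq_bigr => z _.
by rewrite mulrA.
Qed.

Lemma iter_inv j k : iter k (push T) (pistar j) = pistar j.
Proof. elim: k => //= k ->; exact: inv_push. Qed.

Lemma blocksum_off j (f : X -> R) : (forall x, blk x != j -> f x = 0) ->
  \sum_(x | blk x == j) f x = \sum_x f x.
Proof.
move=> H; rewrite [RHS](bigID (fun x => blk x == j)) /= [X in _ = _ + X]big1 ?addr0 //.
Qed.

Lemma pistar_block j : \sum_(x | blk x == j) pistar j x = 1.
Proof. rewrite blocksum_off; [exact: (Hinv j).1.2 | exact: (Hinv j).2.1]. Qed.

Lemma pistar_pos j x : blk x == j -> 0 < pistar j x.
Proof.
move=> bx; have [k Hk] := Hprim j.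
rewrite -(iter_inv j k) (iter_bpow _ _ bx).
have [x0 /andP[b0 p0n]] : exists x0, (blk x0 == j) && (pistar j x0 != 0).
  case: (boolP [exists x0, (blk x0 == j) && (pistar j x0 != 0)]) => [/existsP //|].
  rewrite negb_exists => /forallP H; exfalso.
  have := pistar_block j; rewrite big1 => [/eqP|y bz]; first by rewrite eq_sym oner_eq0.
  by have := H y; rewrite bz /= negbK => /eqP.
rewrite (bigD1 x0) //=.
apply: lt_le_trans (_ : pistar j x0 * bpow blk T j k x0 x <= _).
  apply: mulr_gt0; [by rewrite lt_def p0n (Hinv j).1.1 | exact: Hk].
rewrite lerDl sumr_ge0 // => z _; apply: mulr_ge0; [exact: (Hinv j).1.1 | exact: bpow_ge0].
Qed.

Lemma pis_eval x : pis x = w (blk x) * pistar (blk x) x.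
Proof.
rewrite /pis (bigD1 (blk x)) //= big1 ?addr0 // => j jn.
by rewrite (Hinv j).2.1 ?mulr0 // eq_sym.
Qed.

Lemma pis_ge0 x : 0 <= pis x.
Proof. apply: sumr_ge0 => j _; apply: mulr_ge0; [exact: wt_ge0 | exact: (Hinv j).1.1]. Qed.

Lemma wt_pn j n : wt blk j (pn n) = w j.
Proof. elim: n => // n IH; by rewrite pnS wt_push. Qed.

Lemma PiSet_single : PiSet blk T p0 = [set pis].
Proof.
apply/seteqP; split => pi.
  case=> pis' [Hi ->]; rewrite /set1 /=; apply/funext => x; apply: eq_bigr => j _.
  by rewrite (Huniq (Hi j)).
move=> ->; exists pistar; split => //.
Qed.

Lemma V_KL p : Vfun blk T p0 p = KL p pis.
Proof. by rewrite /Vfun PiSet_single image_set1 ereal_inf1. Qed.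

Lemma supp_pn n x : pn n x != 0 -> pis x != 0.
Proof.
move=> px; have ppos : 0 < pn n x by rewrite lt_def px pn_ge0.
have wpos : 0 < w (blk x).
  rewrite -(wt_pn (blk x) n) /wt (bigD1 x) //=; apply: lt_le_trans ppos _.
  rewrite lerDl sumr_ge0 // => z _; exact: pn_ge0.
rewrite pis_eval; apply: lt0r_neq0; rewrite mulr_gt0 // pistar_pos //.
Qed.

Lemma V_identity n : Vfun blk T p0 (pn n) =
  (\sum_(j < m | (0 < w j)%R) (w j)%:E * KL (cond blk j (pn n)) (pistar j))%E.
Proof.
rewrite V_KL KL_fin; last exact: supp_pn.
rewrite (eq_bigr (fun j : 'I_m => (EFin (w j * \sum_x klr (cond blk j (pn n) x) (pistar j x))))); last first.
  move=> j _; rewrite KL_fin ?EFinM // => x.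
  rewrite /cond; case: (eqVneq (blk x) j) => [bx|]; last by rewrite eqxx.
  move=> _; apply: lt0r_neq0; apply: pistar_pos; by rewrite bx.
rewrite sumEFin; congr (_%:E).
rewrite (partition_big blk xpredT) //= [RHS]big_mkcond /=; apply: eq_bigr => j _.
case: ifPn => [wpos|wnpos].
  rewrite mulr_sumr [RHS](bigID (fun x => blk x == j)) /= [X in _ = _ + X]big1 ?addr0; last first.
    move=> x bx; by rewrite /cond (negbTE bx) /klr eqxx mulr0.
  apply: eq_bigr => x /eqP bx.
  by rewrite pis_eval bx klr_div // /cond bx eqxx wt_pn.
have w0 : w j = 0.
  by have := wt_ge0 j; rewrite le_eqVlt (negbTE wnpos) orbF eq_sym => /eqP.
have Hs : wt blk j (pn n) = 0 by rewrite wt_pn.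
apply: big1 => x bx.
by rewrite (psumr_eq0P (fun x _ => pn_ge0 n x) Hs bx) /klr eqxx.
Qed.

Lemma partition_sum (f : X -> R) : \sum_x f x = \sum_(j < m) \sum_(x | blk x == j) f x.
Proof. by rewrite (partition_big blk xpredT). Qed.

Lemma push_pis : push T pis = pis.
Proof. apply: PiSet_push; rewrite PiSet_single; by []. Qed.

Lemma d_iter n k : (fun x => pn (n + k) x - pis x) = iter k (push T) (fun x => pn n x - pis x).
Proof.
elim: k => [|k IH]; first by rewrite addn0.
by rewrite addnS /= -IH push_lin push_pis.
Qed.

Lemma nonexp j v : \sum_(y | blk y == j) `|push T v y| <= \sum_(x | blk x == j) `|v x|.
Proof.
apply: le_trans (_ : \sum_(y | blk y == j) \sum_(x | blk x == j) `|v x| * T x y <= _).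
  apply: ler_sum => y bz; rewrite push_blk (eqP bz); apply: le_trans (ler_norm_sum _ _ _) _.
  by apply: ler_sum => x _; rewrite normrM (ger0_norm (T0 x y)).
rewrite exchange_big /=; apply: ler_sum => x bx.
by rewrite -mulr_sumr -(eqP bx) Tb mulr1.
Qed.

Lemma contr j : exists k r, (0 <= r) && (r < 1) /\ forall v, \sum_(x | blk x == j) v x = 0 ->
  \sum_(y | blk y == j) `|iter k (push T) v y| <= r * \sum_(x | blk x == j) `|v x|.
Proof.
have [k Hk] := Hprim j.
have [dl dpos Hd] := @pos_lb R (X * X)%type (fun xy : X * X => (blk xy.1 == j) && (blk xy.2 == j))
  (fun xy => bpow blk T j k xy.1 xy.2) (fun xy Hxy => Hk xy.1 xy.2 (andP Hxy).1 (andP Hxy).2).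
have [x0 bx0] := Hne j.
have bx0' : blk x0 == j by rewrite bx0.
set c := \sum_(y | blk y == j) dl.
have cpos : 0 < c.
  rewrite /c (bigD1 x0 bx0') /=; apply: (lt_le_trans dpos).
  rewrite lerDl; apply: sumr_ge0 => y _; exact: ltW dpos.
have cle1 : c <= 1.
  rewrite -(bpow_row k bx0'); apply: ler_sum => y bz.
  by apply: (Hd (x0, y)); rewrite /= bx0' bz.
exists k, (1 - c); split; first by apply/andP; split; lra.
move=> v vsum.
have E y : blk y == j -> iter k (push T) v y = \sum_(x | blk x == j) v x * (bpow blk T j k x y - dl).
  move=> bz; rewrite (@iter_bpow j k v y bz).
  rewrite [RHS](eq_bigr (fun x => v x * bpow blk T j k x y - v x * dl)); last by move=> x _; rewrite mulrBr.
  by rewrite sumrB -mulr_suml vsum mul0r subr0.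
apply: le_trans (_ : \sum_(y | blk y == j) \sum_(x | blk x == j) `|v x| * (bpow blk T j k x y - dl) <= _).
  apply: ler_sum => y bz; rewrite E //; apply: le_trans (ler_norm_sum _ _ _) _.
  apply: ler_sum => x bx; rewrite normrM (ger0_norm (x := _ - dl)) // subr_ge0.
  by apply: (Hd (x, y)); rewrite /= bx bz.
rewrite exchange_big /= mulr_sumr; apply: ler_sum => x bx.
by rewrite -mulr_sumr sumrB bpow_row // -/c mulrC.
Qed.

Lemma pis_block j : \sum_(x | blk x == j) pis x = w j.
Proof.
rewrite (eq_bigr (fun x => w j * pistar j x)); last by move=> x /eqP bx; rewrite pis_eval bx.
by rewrite -mulr_sumr pistar_block mulr1.
Qed.

Lemma ablock_cvg j : (fun n => \sum_(x | blk x == j) `|pn n x - pis x|) @ \oo --> 0.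
Proof.
have [k [r [/andP[r0 r1] Hc]]] := contr j.
apply: (@geo _ _ k r) => //.
- move=> n; apply: sumr_ge0 => *; exact: normr_ge0.
- move=> n; have := nonexp j (fun x => pn n x - pis x); rewrite push_lin push_pis => H; exact: H.
- move=> n; have := Hc (fun x => pn n x - pis x).
  rewrite -(d_iter n k) /=; apply.
  by rewrite sumrB pis_block; have := wt_pn j n; rewrite /wt => ->; rewrite subrr.
Qed.

Lemma A_cvg : (fun n => \sum_x `|pn n x - pis x|) @ \oo --> 0.
Proof.
rewrite (_ : (fun n => _) = fun n => \sum_(j < m) \sum_(x | blk x == j) `|pn n x - pis x|); last first.
  by apply/funext => n; rewrite partition_sum.
have := @cvg_big _ 'I_m +%R (0:R) xpredT add_continuous nat \oo (index_enum 'I_m)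
  (fun j n => \sum_(x | blk x == j) `|pn n x - pis x|) (fun _ => 0) _ (fun j _ => ablock_cvg j).
move=> H; rewrite big1_eq in H; exact: H.
Qed.

Lemma sum_pn n : \sum_x pn n x = 1.
Proof. elim: n => [|n IH]; [exact: p0d.2 | by rewrite pnS push_sum]. Qed.

Lemma sum_pis : \sum_x pis x = 1.
Proof. by rewrite partition_sum (eq_bigr _ (fun j _ => pis_block j)) -p0d.2 partition_sum. Qed.

Lemma v_ge0 n : 0 <= \sum_x klr (pn n x) (pis x).
Proof.
apply: le_trans (_ : \sum_x (pn n x * ln 1 + pn n x - pis x * 1) <= _); last first.
  apply: ler_sum => x _; apply: klr_lb; rewrite ?ltr01 ?pn_ge0 ?pis_ge0 //; exact: supp_pn.
rewrite ln1 (eq_bigr (fun x => pn n x - pis x)); last by move=> x _; rewrite mulr0 add0r mulr1.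
by rewrite sumrB sum_pn sum_pis subrr.
Qed.

Lemma v_bound : exists2 ds, 0 < ds & forall n, \sum_x klr (pn n x) (pis x) <=
  ds^-1 * (\sum_x `|pn n x - pis x| * \sum_x `|pn n x - pis x|).
Proof.
have Hp : forall x, pis x != 0 -> 0 < pis x by move=> x Hx; rewrite lt_def Hx pis_ge0.
have [ds dpos Hds] := @pos_lb R X (fun x => pis x != 0) pis Hp.
exists ds => // n.
set A := \sum_x `|pn n x - pis x|.
apply: le_trans (_ : \sum_x ((if pis x == 0 then 0 else (pn n x - pis x) ^+ 2 / pis x) + (pn n x - pis x)) <= _).
  apply: ler_sum => x _; apply: klr_ub; [exact: pn_ge0 | exact: pis_ge0 | exact: supp_pn].
rewrite big_split /= sumrB sum_pn sum_pis subrr addr0.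
have A0 : 0 <= A by apply: sumr_ge0 => *.
apply: le_trans (_ : \sum_x ds^-1 * (`|pn n x - pis x| * A) <= _); last first.
  by rewrite -mulr_sumr -mulr_suml.
apply: ler_sum => x _; case: eqP => [_|/eqP pn0].
  by apply: mulr_ge0; [rewrite invr_ge0 ltW | apply: mulr_ge0].
have pp : 0 < pis x by rewrite lt_def pn0 pis_ge0.
rewrite [X in _ <= X]mulrC; apply: ler_pM.
- exact: sqr_ge0.
- by rewrite invr_ge0 ltW.
- rewrite -real_normK ?num_real // expr2; apply: ler_wpM2l => //.
  by rewrite /A (bigD1 x) //= lerDl sumr_ge0.
- rewrite lef_pV2 ?posrE //; exact: Hds.
Qed.

Lemma v_cvg : (fun n => \sum_x klr (pn n x) (pis x)) @ \oo --> 0.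
Proof.
have [ds dpos Hv] := v_bound.
apply: (@squeeze0 _ _ (fun n => \sum_x `|pn n x - pis x|) ds^-1) => [n|]; last exact: A_cvg.
apply/andP; split; [exact: v_ge0 | ]. have := Hv n; rewrite -mulr_suml; exact.
Qed.

Lemma Vcvg : (fun n => Vfun blk T p0 (pn n)) @ \oo --> 0%E.
Proof.
have vE n : Vfun blk T p0 (pn n) = (\sum_x klr (pn n x) (pis x))%:E.
  by rewrite V_KL KL_fin //; exact: supp_pn.
rewrite (_ : (fun n => _) = (fun n => (\sum_x klr (pn n x) (pis x))%:E)); last first.
  by apply/funext => n; rewrite vE.
apply: cvg_EFin; first by near=> n.
exact: v_cvg.
Unshelve. all: end_near.
Qed.

End Markov.

Theorem theorem1 (R : realType) (X : finType) (m : nat) (blk : X -> 'I_m)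
  (T : X -> X -> R) (p0 : X -> R) :
  (forall j : 'I_m, exists x : X, blk x = j) ->
  (forall x y, 0 <= T x y) ->
  (forall x, \sum_(y : X) T x y = 1) ->
  (forall x, \sum_(y | blk y == blk x) T x y = 1) ->
  is_dist p0 ->
  let pn := fun n : nat => iter n (push T) p0 in
  (forall n : nat, (Vfun blk T p0 (pn n.+1) <= Vfun blk T p0 (pn n))%E) /\
  (forall pistar : 'I_m -> X -> R,
     (forall j, primitive_block blk T j) ->
     (forall j, inv_block blk T j (pistar j)) ->
     (forall j pi, inv_block blk T j pi -> pi = pistar j) ->
     (forall n : nat,
        Vfun blk T p0 (pn n) =
        (\sum_(j < m | (0 < wt blk j p0)%R)
            (wt blk j p0)%:E * KL (cond blk j (pn n)) (pistar j))%E) /\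
     ((fun n => Vfun blk T p0 (pn n)) @ \oo --> (0 : \bar R))).
Proof.
move=> Hne T0 T1 Tb p0d pn; split.
  move=> n; apply: Vmono => //.
move=> pistar Hprim Hinv Huniq; split.
  move=> n; apply: V_identity => //.
apply: Vcvg => //.
Qed.
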